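(* Let $\mathcal M$ be a Type $\mathcal A$ affine surface geometry and let $\mathcal Q_c:=\mathcal Q(\mathcal M)\otimes_{\mathbb R}\mathbb C$. (1) $\mathcal Q_c$ has a basis consisting of functions of the form $e^{\alpha_1x^1+\alpha_2x^2}p(x^1,x^2)$, where $(\alpha_1,\alpha_2)\in\mathbb C^2$, $p$ is a (complex) polynomial of degree at most $2$ in $(x^1,x^2)$, and $e^{\alpha_1x^1+\alpha_2x^2}\in\mathcal Q_c$. (2) There exist real linear functions $L_1,L_2,L_3$, a real polynomial $Q$ of degree at most $2$, and a basis $\mathcal B$ of $\mathcal Q(\mathcal M)$ of one of the following four forms: $\mathcal B=\{e^{L_1}\cos(L_2),e^{L_1}\sin(L_2),e^{L_3}\}$, $\mathcal B=\{e^{L_1},e^{L_2},e^{L_3}\}$, $\mathcal B=\{e^{L_1},L_2e^{L_1},e^{L_3}\}$, or $\mathcal B=\{e^{L_1},L_2e^{L_1},Qe^{L_1}\}$.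
   Context: An affine manifold $(M,\nabla)$ is a smooth manifold $M$ of dimension $m\ge 2$ with a torsion-free connection $\nabla$ on $TM$; in local coordinates $\nabla_{\partial_{x^i}}\partial_{x^j}=\Gamma_{ij}^k\partial_{x^k}$ (summation over repeated indices). The curvature is $R(X,Y)Z=\nabla_X\nabla_YZ-\nabla_Y\nabla_XZ-\nabla_{[X,Y]}Z$, the Ricci tensor is $\rho(Y,Z)=\mathrm{Tr}(X\mapsto R(X,Y)Z)$, and $\rho_s(X,Y)=\frac12(\rho(X,Y)+\rho(Y,X))$. The Hessian is $\mathcal H_\nabla f=(\partial_{x^i}\partial_{x^j}f-\Gamma_{ij}^k\partial_{x^k}f)\,dx^i\otimes dx^j$. The quasi-Einstein solution space is $\mathcal Q(M,\nabla)=\{f\in C^\infty(M):\mathcal H_\nabla f+\frac{1}{m-1}f\rho_s=0\}$. For real constants, $\Gamma(a,b,c,d,e,f)$ denotes the connection on (an open subset of) $\mathbb R^2$ whose Christoffel symbols in the standard coordinates $(x^1,x^2)$ are the constants $\Gamma_{11}^1=a$, $\Gamma_{11}^2=b$, $\Gamma_{12}^1=\Gamma_{21}^1=c$, $\Gamma_{12}^2=\Gamma_{21}^2=d$, $\Gamma_{22}^1=e$, $\Gamma_{22}^2=f$. A Type $\mathcal A$ affine surface geometry is $(\mathbb R^2,\Gamma(a,b,c,d,e,f))$. A (real) linear function is a function $L(x^1,x^2)=\alpha_1x^1+\alpha_2x^2$ with $\alpha_1,\alpha_2\in\mathbb R$. *)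

(* Defs.v *)
From Stdlib Require Import Reals.
Open Scope R_scope.

Inductive I2 : Type := i1 | i2.
Definition sumI2 (g : I2 -> R) : R := g i1 + g i2.

(** A connection with constant Christoffel symbols: Conn i j k = Gamma_{ij}^k. *)
Definition Conn := I2 -> I2 -> I2 -> R.

Definition GammaA (a b c d e f : R) : Conn := fun i j k =>
  match i, j, k with
  | i1, i1, i1 => a
  | i1, i1, i2 => b
  | i1, i2, i1 | i2, i1, i1 => c
  | i1, i2, i2 | i2, i1, i2 => d
  | i2, i2, i1 => e
  | i2, i2, i2 => f
  end.

(** Curvature of a constant-coefficient connection on coordinate fields:
    R(d_i,d_j) d_k = Rcurv G i j k m d_m, obtained from
    nabla_{d_i} nabla_{d_j} d_k - nabla_{d_j} nabla_{d_i} d_k (the bracket vanishes,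
    and the Christoffel symbols are constant). *)
Definition Rcurv (G : Conn) (i j k m : I2) : R :=
  sumI2 (fun l => G j k l * G i l m - G i k l * G j l m).

(** Ricci tensor rho(d_j,d_k) = Tr (X |-> R(X,d_j) d_k). *)
Definition ricci (G : Conn) (j k : I2) : R := sumI2 (fun i => Rcurv G i j k i).

Definition ricci_s (G : Conn) (i j : I2) : R := (ricci G i j + ricci G j i) / 2.

Definition partial1 (f g : R -> R -> R) : Prop :=
  forall x y, derivable_pt_lim (fun t => f t y) x (g x y).
Definition partial2 (f g : R -> R -> R) : Prop :=
  forall x y, derivable_pt_lim (fun t => f x t) y (g x y).
Definition Dpart (i : I2) (f g : R -> R -> R) : Prop :=
  match i with i1 => partial1 f g | i2 => partial2 f g end.

Definition cont2 (f : R -> R -> R) : Prop :=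
  forall x y eps, 0 < eps -> exists del, 0 < del /\
    forall x' y', Rabs (x' - x) < del -> Rabs (y' - y) < del ->
      Rabs (f x' y' - f x y) < eps.

CoInductive smooth (f : R -> R -> R) : Prop :=
  smooth_intro : forall g1 g2 : R -> R -> R,
    cont2 f -> partial1 f g1 -> partial2 f g2 -> smooth g1 -> smooth g2 -> smooth f.

(** Quasi-Einstein solution space on (R^2, G), m = 2:
    H f + 1/(m-1) f rho_s = 0, with H f_{ij} = d_i d_j f - Gamma_{ij}^k d_k f. *)
Definition in_Q (G : Conn) (f : R -> R -> R) : Prop :=
  smooth f /\
  exists (d : I2 -> R -> R -> R) (dd : I2 -> I2 -> R -> R -> R),
    (forall i, Dpart i f (d i)) /\
    (forall i j, Dpart i (d j) (dd i j)) /\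
    (forall i j x y,
       dd i j x y - sumI2 (fun k => G i j k * d k x y)
       + / (2 - 1) * f x y * ricci_s G i j = 0).

Fixpoint rsum (n : nat) (g : nat -> R) : R :=
  match n with O => 0 | S n' => rsum n' g + g n' end.

Definition rbasis_Q (G : Conn) (n : nat) (B : nat -> R -> R -> R) : Prop :=
  (forall k, (k < n)%nat -> in_Q G (B k)) /\
  (forall c : nat -> R, (forall x y, rsum n (fun k => c k * B k x y) = 0) ->
     forall k, (k < n)%nat -> c k = 0) /\
  (forall F, in_Q G F -> exists c : nat -> R,
     forall x y, F x y = rsum n (fun k => c k * B k x y)).

Definition Cx := (R * R)%type.
Definition C0 : Cx := (0, 0).
Definition RC (r : R) : Cx := (r, 0).
Definition Cadd (z w : Cx) : Cx := (fst z + fst w, snd z + snd w).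
Definition Cmul (z w : Cx) : Cx :=
  (fst z * fst w - snd z * snd w, fst z * snd w + snd z * fst w).
Definition Cexp (z : Cx) : Cx := (exp (fst z) * cos (snd z), exp (fst z) * sin (snd z)).

Fixpoint csum (n : nat) (g : nat -> Cx) : Cx :=
  match n with O => C0 | S n' => Cadd (csum n' g) (g n') end.

(** Q_c = Q(M) (x)_R C, realised as complex-valued functions u + i v with u, v in Q(M). *)
Definition in_Qc (G : Conn) (F : R -> R -> Cx) : Prop :=
  in_Q G (fun x y => fst (F x y)) /\ in_Q G (fun x y => snd (F x y)).

Definition cbasis_Qc (G : Conn) (n : nat) (B : nat -> R -> R -> Cx) : Prop :=
  (forall k, (k < n)%nat -> in_Qc G (B k)) /\
  (forall c : nat -> Cx, (forall x y, csum n (fun k => Cmul (c k) (B k x y)) = C0) ->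
     forall k, (k < n)%nat -> c k = C0) /\
  (forall F, in_Qc G F -> exists c : nat -> Cx,
     forall x y, F x y = csum n (fun k => Cmul (c k) (B k x y))).

Definition cexplin (a1 a2 : Cx) (x y : R) : Cx :=
  Cexp (Cadd (Cmul a1 (RC x)) (Cmul a2 (RC y))).

Definition cpoly2 (p : nat -> nat -> Cx) (x y : R) : Cx :=
  csum 3 (fun i => csum (3 - i) (fun j => Cmul (p i j) (RC (x ^ i * y ^ j)))).

Definition rpoly2 (q : nat -> nat -> R) (x y : R) : R :=
  rsum 3 (fun i => rsum (3 - i) (fun j => q i j * (x ^ i * y ^ j))).

Definition lin (l : R * R) (x y : R) : R := fst l * x + snd l * y.

(* Main.v *)
Require Import Defs.
From Stdlib Require Import Reals Lra Lia Nsatz FunctionalExtensionality.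
From Coquelicot Require Import Coquelicot.
Open Scope R_scope.


Lemma cont2_of (f : R -> R -> R) :
  (forall x y, continuous (fun z : R * R => f (fst z) (snd z)) (x, y)) -> cont2 f.
Proof.
  intros H x y eps Heps.
  specialize (H x y). apply filterlim_locally with (eps := mkposreal eps Heps) in H.
  destruct H as [del Hdel]. exists del. split. apply cond_pos.
  intros x' y' H1 H2. apply (Hdel (x', y')). split; simpl; assumption.
Qed.

Lemma cont_fst2 (x y : R) : continuous (fun z : R * R => fst z) (x, y).
Proof. apply continuous_fst. Qed.
Lemma cont_snd2 (x y : R) : continuous (fun z : R * R => snd z) (x, y).
Proof. apply continuous_snd. Qed.
Lemma cont_plus2 (f g : R * R -> R) z : continuous f z -> continuous g z ->
  continuous (fun u => f u + g u) z.
Proof. intros; apply (continuous_plus f g); auto. Qed.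
Lemma cont_mult2 (f g : R * R -> R) z : continuous f z -> continuous g z ->
  continuous (fun u => f u * g u) z.
Proof. intros; apply (continuous_mult f g); auto. Qed.
Lemma cont_const2 (c : R) z : continuous (fun _ : R * R => c) z.
Proof. apply continuous_const. Qed.
Lemma cont_comp2 (g : R -> R) (f : R * R -> R) z :
  continuous f z -> (forall t, continuous g t) -> continuous (fun u => g (f u)) z.
Proof. intros; apply (continuous_comp f g); auto. Qed.
Lemma cont_cos t : continuous cos t.
Proof. apply continuous_cos. Qed.
Lemma cont_sin t : continuous sin t.
Proof. apply continuous_sin. Qed.
Lemma cont_exp t : continuous exp t.
Proof. apply continuous_exp. Qed.
Record poly2 := P2 { k0 : R; k1 : R; k2 : R; k3 : R; k4 : R; k5 : R }.
Definition peval (p : poly2) (x y : R) : R :=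
  k0 p + k1 p * x + k2 p * y + k3 p * (x*x) + k4 p * (x*y) + k5 p * (y*y).
Definition px (p : poly2) := P2 (k1 p) (2*k3 p) (k4 p) 0 0 0.
Definition py (p : poly2) := P2 (k2 p) (k4 p) (2*k5 p) 0 0 0.
Definition plc (a : R) (p : poly2) (b : R) (q : poly2) :=
  P2 (a*k0 p + b*k0 q) (a*k1 p + b*k1 q) (a*k2 p + b*k2 q)
     (a*k3 p + b*k3 q) (a*k4 p + b*k4 q) (a*k5 p + b*k5 q).

Section Fam.
Variables l1 l2 w1 w2 : R.
Definition ev (P S : poly2) (x y : R) : R :=
  exp (l1*x + l2*y) * (peval P x y * cos (w1*x + w2*y) + peval S x y * sin (w1*x + w2*y)).
Definition DP1 (P S : poly2) := plc 1 (plc l1 P 1 (px P)) w1 S.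
Definition DS1 (P S : poly2) := plc 1 (plc l1 S 1 (px S)) (-w1) P.
Definition DP2 (P S : poly2) := plc 1 (plc l2 P 1 (py P)) w2 S.
Definition DS2 (P S : poly2) := plc 1 (plc l2 S 1 (py S)) (-w2) P.

Lemma ev_d1 P S : partial1 (ev P S) (ev (DP1 P S) (DS1 P S)).
Proof.
  intros x y. apply is_derive_Reals. unfold ev, peval, DP1, DS1, plc, px; simpl.
  auto_derive; auto. ring.
Qed.
Lemma ev_d2 P S : partial2 (ev P S) (ev (DP2 P S) (DS2 P S)).
Proof.
  intros x y. apply is_derive_Reals. unfold ev, peval, DP2, DS2, plc, py; simpl.
  auto_derive; auto. ring.
Qed.
End Fam.

Ltac cont2t := repeat first
  [ apply cont_plus2 | apply cont_mult2 | apply cont_fst2 | apply cont_snd2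
  | apply cont_const2
  | apply cont_comp2; [ | first [apply cont_cos | apply cont_sin | apply cont_exp]] ].

Lemma ev_cont l1 l2 w1 w2 P S : cont2 (ev l1 l2 w1 w2 P S).
Proof.
  apply cont2_of. intros x y. unfold ev, peval. cont2t.
Qed.

Lemma ev_smooth : forall l1 l2 w1 w2 P S, smooth (ev l1 l2 w1 w2 P S).
Proof.
  cofix IH. intros. apply smooth_intro with
    (ev l1 l2 w1 w2 (DP1 l1 w1 P S) (DS1 l1 w1 P S))
    (ev l1 l2 w1 w2 (DP2 l2 w2 P S) (DS2 l2 w2 P S)).
  - apply ev_cont.
  - apply ev_d1.
  - apply ev_d2.
  - apply IH.
  - apply IH.
Qed.

Lemma mono_dec (h h' : R -> R) :
  (forall t, derivable_pt_lim h t (h' t)) -> (forall t, h' t <= 0) ->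
  forall x y, x <= y -> h y <= h x.
Proof.
  intros Hd Hn.
  set (pr := fun t => exist (fun l => derivable_pt_abs h t l) (h' t) (Hd t) : derivable_pt h t).
  apply (nonpos_derivative_1 h pr). intro t. unfold derive_pt, pr. simpl. apply Hn.
Qed.

Lemma abs2 (m a b : R) : m * a * b <= Rabs m * (a*a + b*b) / 2.
Proof.
  assert (H : m * a * b <= Rabs (m * a * b)) by apply Rle_abs.
  rewrite !Rabs_mult in H.
  assert (Rabs a * Rabs b <= (a*a+b*b)/2).
  { assert (0 <= (Rabs a - Rabs b)^2) by apply pow2_ge_0.
    assert (Rabs a ^ 2 = a ^ 2) by apply pow2_abs.
    assert (Rabs b ^ 2 = b ^ 2) by apply pow2_abs.
    nra. }
  assert (0 <= Rabs m) by apply Rabs_pos. nra.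
Qed.

Section ODE.
Variables (u0 u1 u2 : R -> R) (m00 m01 m02 m10 m11 m12 m20 m21 m22 : R).
Hypothesis H0 : forall t, derivable_pt_lim u0 t (m00*u0 t + m01*u1 t + m02*u2 t).
Hypothesis H1 : forall t, derivable_pt_lim u1 t (m10*u0 t + m11*u1 t + m12*u2 t).
Hypothesis H2 : forall t, derivable_pt_lim u2 t (m20*u0 t + m21*u1 t + m22*u2 t).
Hypothesis I0 : u0 0 = 0.
Hypothesis I1 : u1 0 = 0.
Hypothesis I2' : u2 0 = 0.

Let E t := u0 t * u0 t + u1 t * u1 t + u2 t * u2 t.
Let E' t := 2 * (u0 t * (m00*u0 t + m01*u1 t + m02*u2 t)
                + u1 t * (m10*u0 t + m11*u1 t + m12*u2 t)
                + u2 t * (m20*u0 t + m21*u1 t + m22*u2 t)).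
Let K := 2 * (Rabs m00 + Rabs m01 + Rabs m02 + Rabs m10 + Rabs m11 + Rabs m12
              + Rabs m20 + Rabs m21 + Rabs m22).

Lemma E_der t : derivable_pt_lim E t (E' t).
Proof.
  unfold E, E'.
  replace (2 * (u0 t * (m00*u0 t + m01*u1 t + m02*u2 t)
                + u1 t * (m10*u0 t + m11*u1 t + m12*u2 t)
                + u2 t * (m20*u0 t + m21*u1 t + m22*u2 t))) with
   ((m00*u0 t + m01*u1 t + m02*u2 t) * u0 t + u0 t * (m00*u0 t + m01*u1 t + m02*u2 t)
   + ((m10*u0 t + m11*u1 t + m12*u2 t) * u1 t + u1 t * (m10*u0 t + m11*u1 t + m12*u2 t))
   + ((m20*u0 t + m21*u1 t + m22*u2 t) * u2 t + u2 t * (m20*u0 t + m21*u1 t + m22*u2 t)))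
   by ring.
  apply (derivable_pt_lim_plus (fun t => u0 t * u0 t + u1 t * u1 t) (fun t => u2 t * u2 t)).
  apply (derivable_pt_lim_plus (fun t => u0 t * u0 t) (fun t => u1 t * u1 t)).
  all: apply derivable_pt_lim_mult; auto.
Qed.

Lemma E_bound t : Rabs (E' t) <= K * E t.
Proof.
  unfold E', K, E.
  set (a := u0 t); set (b := u1 t); set (c := u2 t).
  assert (X1 := abs2 m00 a a). assert (X2 := abs2 m01 a b). assert (X3 := abs2 m02 a c).
  assert (X4 := abs2 m10 b a). assert (X5 := abs2 m11 b b). assert (X6 := abs2 m12 b c).
  assert (X7 := abs2 m20 c a). assert (X8 := abs2 m21 c b). assert (X9 := abs2 m22 c c).
  assert (Y1 := abs2 (-m00) a a). assert (Y2 := abs2 (-m01) a b). assert (Y3 := abs2 (-m02) a c).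
  assert (Y4 := abs2 (-m10) b a). assert (Y5 := abs2 (-m11) b b). assert (Y6 := abs2 (-m12) b c).
  assert (Y7 := abs2 (-m20) c a). assert (Y8 := abs2 (-m21) c b). assert (Y9 := abs2 (-m22) c c).
  rewrite !Rabs_Ropp in *.
  assert (Z1 := Rabs_pos m00). assert (Z2 := Rabs_pos m01). assert (Z3 := Rabs_pos m02).
  assert (Z4 := Rabs_pos m10). assert (Z5 := Rabs_pos m11). assert (Z6 := Rabs_pos m12).
  assert (Z7 := Rabs_pos m20). assert (Z8 := Rabs_pos m21). assert (Z9 := Rabs_pos m22).
  assert (0 <= a*a) by nra. assert (0 <= b*b) by nra. assert (0 <= c*c) by nra.
  apply Rabs_le. split; nra.
Qed.

Lemma E_zero t : E t = 0.
Proof.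
  assert (E0 : E 0 = 0) by (unfold E; rewrite I0, I1, I2'; ring).
  assert (Epos : forall t, 0 <= E t) by (intro s; unfold E; nra).
  destruct (Rle_dec 0 t) as [Ht | Ht].
  - set (h s := E s * exp (- K * s)).
    assert (Hd : forall s, derivable_pt_lim h s (E' s * exp (- K * s) + E s * (exp (-K*s) * (-K)))).
    { intro s. unfold h. apply (derivable_pt_lim_mult E (fun s => exp (- K * s))). apply E_der.
      apply is_derive_Reals. auto_derive; auto. ring. }
    assert (h t <= h 0).
    { apply (mono_dec h _ Hd); [ | lra]. intro s. assert (Hb := E_bound s).
      assert (Hp := exp_pos (-K*s)). apply Rabs_le_between in Hb. nra. }
    unfold h in H. rewrite E0 in H. assert (Hp := exp_pos (-K*t)). specialize (Epos t). nra.
  - set (h s := E s * exp (K * s)).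
    assert (Hd : forall s, derivable_pt_lim h s (E' s * exp (K * s) + E s * (exp (K*s) * K))).
    { intro s. unfold h. apply (derivable_pt_lim_mult E (fun s => exp (K * s))). apply E_der.
      apply is_derive_Reals. auto_derive; auto. ring. }
    set (g s := - h s).
    assert (Hd' : forall s, derivable_pt_lim g s (- (E' s * exp (K * s) + E s * (exp (K*s) * K)))).
    { intro s. unfold g. apply derivable_pt_lim_opp. apply Hd. }
    assert (g 0 <= g t).
    { apply (mono_dec g _ Hd'); [ | lra]. intro s. assert (Hb := E_bound s).
      assert (Hp := exp_pos (K*s)). apply Rabs_le_between in Hb. nra. }
    unfold g, h in H. rewrite E0 in H. assert (Hp := exp_pos (K*t)). specialize (Epos t). nra.
Qed.

Lemma ode_zero t : u0 t = 0 /\ u1 t = 0 /\ u2 t = 0.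
Proof.
  assert (H := E_zero t). unfold E in H. repeat split; nra.
Qed.
End ODE.

Lemma dpl_eq f x l l' : derivable_pt_lim f x l -> l = l' -> derivable_pt_lim f x l'.
Proof. intros H ->; exact H. Qed.

Lemma Q_unique G f d dd :
  (forall i, Dpart i f (d i)) -> (forall i j, Dpart i (d j) (dd i j)) ->
  (forall i j x y, dd i j x y - sumI2 (fun k => G i j k * d k x y)
       + / (2 - 1) * f x y * ricci_s G i j = 0) ->
  f 0 0 = 0 -> d i1 0 0 = 0 -> d i2 0 0 = 0 -> forall x y, f x y = 0.
Proof.
  intros Hd Hdd Heq F0 D10 D20.
  assert (Hr : forall i j x y, dd i j x y =
     G i j i1 * d i1 x y + G i j i2 * d i2 x y - ricci_s G i j * f x y).
  { intros. specialize (Heq i j x y). unfold sumI2 in Heq.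
    replace (/ (2-1)) with 1 in Heq by field. lra. }
  assert (S1 : forall t, f t 0 = 0 /\ d i1 t 0 = 0 /\ d i2 t 0 = 0).
  { intro t.
    apply (ode_zero (fun t => f t 0) (fun t => d i1 t 0) (fun t => d i2 t 0)
      0 1 0 (- ricci_s G i1 i1) (G i1 i1 i1) (G i1 i1 i2)
      (- ricci_s G i1 i2) (G i1 i2 i1) (G i1 i2 i2)); auto.
    - intro s. apply dpl_eq with (d i1 s 0). apply (Hd i1). ring.
    - intro s. apply dpl_eq with (dd i1 i1 s 0). apply (Hdd i1 i1). rewrite Hr. ring.
    - intro s. apply dpl_eq with (dd i1 i2 s 0). apply (Hdd i1 i2). rewrite Hr. ring. }
  intros x y.
  apply (ode_zero (fun s => f x s) (fun s => d i1 x s) (fun s => d i2 x s)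
      0 0 1 (- ricci_s G i2 i1) (G i2 i1 i1) (G i2 i1 i2)
      (- ricci_s G i2 i2) (G i2 i2 i1) (G i2 i2 i2)); try apply S1.
  - intro s. apply dpl_eq with (d i2 x s). apply (Hd i2). ring.
  - intro s. apply dpl_eq with (dd i2 i1 x s). apply (Hdd i2 i1). rewrite Hr. ring.
  - intro s. apply dpl_eq with (dd i2 i2 x s). apply (Hdd i2 i2). rewrite Hr. ring.
Qed.

Definition Hsol (G : Conn) f (d : I2 -> R -> R -> R) (dd : I2 -> I2 -> R -> R -> R) :=
  (forall i, Dpart i f (d i)) /\ (forall i j, Dpart i (d j) (dd i j)) /\
  (forall i j x y, dd i j x y - sumI2 (fun k => G i j k * d k x y)
       + / (2 - 1) * f x y * ricci_s G i j = 0).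

Lemma Hsol_inQ G f d dd : smooth f -> Hsol G f d dd -> in_Q G f.
Proof. intros Hs [H1 [H2 H3]]. split; auto. exists d, dd. auto. Qed.

Lemma Dpart_unique i f f' g' x y : Dpart i f f' -> Dpart i f g' -> f' x y = g' x y.
Proof. destruct i; simpl; intros H K; eapply uniqueness_limite; eauto. Qed.

Lemma Dpart_zero i f f' x y : (forall x y, f x y = 0) -> Dpart i f f' -> f' x y = 0.
Proof.
  intros Hz H. assert (f = fun _ _ => 0) by (apply functional_extensionality; intro;
    apply functional_extensionality; intro; apply Hz).
  subst f. apply (Dpart_unique i (fun _ _ => 0) f' (fun _ _ => 0)); auto.
  destruct i; intros u v; apply derivable_pt_lim_const.
Qed.

Lemma dlin3 (F G H : R->R) l1 l2 l3 a b c x : derivable_pt_lim F x l1 -> derivable_pt_lim G x l2 ->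
  derivable_pt_lim H x l3 ->
  derivable_pt_lim (fun t => a * F t + b * G t + c * H t) x (a*l1+b*l2+c*l3).
Proof.
  rewrite <- !is_derive_Reals. intros.
  apply (is_derive_plus (fun t => a * F t + b * G t) (fun t => c * H t)).
  apply (is_derive_plus (fun t => a * F t) (fun t => b * G t)).
  all: apply (is_derive_scal); auto.
Qed.

Lemma Dpart_lin3 i f f' g g' h h' a b c : Dpart i f f' -> Dpart i g g' -> Dpart i h h' ->
  Dpart i (fun x y => a * f x y + b * g x y + c * h x y)
          (fun x y => a * f' x y + b * g' x y + c * h' x y).
Proof.
  destruct i; simpl; intros Hf Hg Hh x y; apply dlin3; auto.
Qed.

Lemma Hsol_lin3 G f d dd g e ee h k kk a b c : Hsol G f d dd -> Hsol G g e ee -> Hsol G h k kk ->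
  Hsol G (fun x y => a * f x y + b * g x y + c * h x y)
     (fun i x y => a * d i x y + b * e i x y + c * k i x y)
     (fun i j x y => a * dd i j x y + b * ee i j x y + c * kk i j x y).
Proof.
  intros [H1 [H2 H3]] [K1 [K2 K3]] [L1 [L2 L3]]. split; [|split].
  - intro i. apply Dpart_lin3; auto.
  - intros i j. apply Dpart_lin3; auto.
  - intros i j x y. specialize (H3 i j x y). specialize (K3 i j x y). specialize (L3 i j x y).
    unfold sumI2 in *. nra.
Qed.

Definition det3 a1 a2 a3 b1 b2 b3 c1 c2 c3 :=
  a1 * (b2 * c3 - b3 * c2) - a2 * (b1 * c3 - b3 * c1) + a3 * (b1 * c2 - b2 * c1).

Lemma alg3 a1 a2 a3 b1 b2 b3 c1 c2 c3 x y z : det3 a1 a2 a3 b1 b2 b3 c1 c2 c3 <> 0 ->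
  x * a1 + y * b1 + z * c1 = 0 -> x * a2 + y * b2 + z * c2 = 0 -> x * a3 + y * b3 + z * c3 = 0 ->
  x = 0 /\ y = 0 /\ z = 0.
Proof.
  intros D E1 E2 E3. unfold det3 in D.
  assert (X : x * det3 a1 a2 a3 b1 b2 b3 c1 c2 c3 = 0) by (unfold det3; nsatz).
  assert (Y : y * det3 a1 a2 a3 b1 b2 b3 c1 c2 c3 = 0) by (unfold det3; nsatz).
  assert (Z : z * det3 a1 a2 a3 b1 b2 b3 c1 c2 c3 = 0) by (unfold det3; nsatz).
  unfold det3 in X, Y, Z.
  apply Rmult_integral in X; apply Rmult_integral in Y; apply Rmult_integral in Z.
  intuition.
Qed.

Lemma solve3 a1 a2 a3 b1 b2 b3 c1 c2 c3 u1 u2 u3 : det3 a1 a2 a3 b1 b2 b3 c1 c2 c3 <> 0 ->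
  exists x y z, x * a1 + y * b1 + z * c1 = u1 /\ x * a2 + y * b2 + z * c2 = u2 /\
    x * a3 + y * b3 + z * c3 = u3.
Proof.
  intros D.
  exists (det3 u1 u2 u3 b1 b2 b3 c1 c2 c3 / det3 a1 a2 a3 b1 b2 b3 c1 c2 c3),
         (det3 a1 a2 a3 u1 u2 u3 c1 c2 c3 / det3 a1 a2 a3 b1 b2 b3 c1 c2 c3),
         (det3 a1 a2 a3 b1 b2 b3 u1 u2 u3 / det3 a1 a2 a3 b1 b2 b3 c1 c2 c3).
  unfold det3 in *. repeat split; field; auto.
Qed.

Definition B3 (B0 B1 B2 : R -> R -> R) (n : nat) : R -> R -> R :=
  match n with 0%nat => B0 | 1%nat => B1 | _ => B2 end.

Lemma basis3 G B0 B1 B2 d0 d1 d2 dd0 dd1 dd2 :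
  smooth B0 -> smooth B1 -> smooth B2 ->
  Hsol G B0 d0 dd0 -> Hsol G B1 d1 dd1 -> Hsol G B2 d2 dd2 ->
  det3 (B0 0 0) (d0 i1 0 0) (d0 i2 0 0) (B1 0 0) (d1 i1 0 0) (d1 i2 0 0)
       (B2 0 0) (d2 i1 0 0) (d2 i2 0 0) <> 0 ->
  rbasis_Q G 3 (B3 B0 B1 B2).
Proof.
  intros S0 S1 S2 H0 H1 H2 Hdet.
  split; [|split].
  - intros k Hk. destruct k as [|[|[|k]]]; simpl.
    + eapply Hsol_inQ; eauto.
    + eapply Hsol_inQ; eauto.
    + eapply Hsol_inQ; eauto.
    + lia.
  - intros c Hc.
    set (f := fun x y => c 0%nat * B0 x y + c 1%nat * B1 x y + c 2%nat * B2 x y).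
    assert (Hf : forall x y, f x y = 0).
    { intros x y. specialize (Hc x y). simpl in Hc. unfold f. lra. }
    assert (He : forall i, Dpart i f (fun x y => c 0%nat * d0 i x y + c 1%nat * d1 i x y + c 2%nat * d2 i x y)).
    { intro i. apply Dpart_lin3; [apply H0 | apply H1 | apply H2]. }
    assert (E0 := Hf 0 0). unfold f in E0.
    assert (E1 := Dpart_zero i1 f _ 0 0 Hf (He i1)). simpl in E1.
    assert (E2 := Dpart_zero i2 f _ 0 0 Hf (He i2)). simpl in E2.
    destruct (alg3 _ _ _ _ _ _ _ _ _ _ _ _ Hdet E0 E1 E2) as [Z0 [Z1 Z2]].
    intros k Hk. destruct k as [|[|[|k]]]; [ exact Z0 | exact Z1 | exact Z2 | lia].
  - intros F [SF [d [dd [Hd1 [Hd2 Hd3]]]]].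
    assert (HF : Hsol G F d dd) by (split; [|split]; auto).
    destruct (solve3 _ _ _ _ _ _ _ _ _ (F 0 0) (d i1 0 0) (d i2 0 0) Hdet)
      as [x0 [y0 [z0 [Q1 [Q2 Q3]]]]].
    exists (fun n => match n with 0%nat => x0 | 1%nat => y0 | _ => z0 end).
    assert (Hg := Hsol_lin3 _ _ _ _ _ _ _ _ _ _ x0 y0 z0 H0 H1 H2).
    assert (Hh := Hsol_lin3 _ _ _ _ _ _ _ _ _ _ 1 (-1) 0 HF Hg HF).
    destruct Hh as [K1 [K2 K3]].
    intros x y. simpl.
    assert (Z := Q_unique _ _ _ _ K1 K2 K3). simpl in Z.
    assert (Z' : F x y - (x0 * B0 x y + y0 * B1 x y + z0 * B2 x y) = 0).
    { rewrite <- (Z ltac:(lra) ltac:(lra) ltac:(lra) x y). ring. }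
    lra.
Qed.

Definition r11 (a b c d e f : R) : R := a*d+b*f-b*c-d*d.
Definition r12 (a b c d e f : R) : R := c*d-b*e.
Definition r22 (a b c d e f : R) : R := f*c+e*a-e*d-c*c.

Lemma ric11 a b c d e f : ricci_s (GammaA a b c d e f) i1 i1 = r11 a b c d e f.
Proof. unfold ricci_s, ricci, Rcurv, sumI2, r11; simpl. field. Qed.
Lemma ric12 a b c d e f : ricci_s (GammaA a b c d e f) i1 i2 = r12 a b c d e f.
Proof. unfold ricci_s, ricci, Rcurv, sumI2, r12; simpl. field. Qed.
Lemma ric21 a b c d e f : ricci_s (GammaA a b c d e f) i2 i1 = r12 a b c d e f.
Proof. unfold ricci_s, ricci, Rcurv, sumI2, r12; simpl. field. Qed.
Lemma ric22 a b c d e f : ricci_s (GammaA a b c d e f) i2 i2 = r22 a b c d e f.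
Proof. unfold ricci_s, ricci, Rcurv, sumI2, r22; simpl. field. Qed.

Definition Dp l1 l2 w1 w2 i := match i with i1 => DP1 l1 w1 | i2 => DP2 l2 w2 end.
Definition Ds l1 l2 w1 w2 i := match i with i1 => DS1 l1 w1 | i2 => DS2 l2 w2 end.
Definition evd l1 l2 w1 w2 P S i :=
  ev l1 l2 w1 w2 (Dp l1 l2 w1 w2 i P S) (Ds l1 l2 w1 w2 i P S).
Definition evdd l1 l2 w1 w2 P S i j :=
  ev l1 l2 w1 w2 (Dp l1 l2 w1 w2 i (Dp l1 l2 w1 w2 j P S) (Ds l1 l2 w1 w2 j P S))
                 (Ds l1 l2 w1 w2 i (Dp l1 l2 w1 w2 j P S) (Ds l1 l2 w1 w2 j P S)).

Lemma ev_Dpart l1 l2 w1 w2 P S i : Dpart i (ev l1 l2 w1 w2 P S) (evd l1 l2 w1 w2 P S i).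
Proof. destruct i; [apply ev_d1 | apply ev_d2]. Qed.
Lemma ev_Dpart2 l1 l2 w1 w2 P S i j : Dpart i (evd l1 l2 w1 w2 P S j) (evdd l1 l2 w1 w2 P S i j).
Proof. unfold evd, evdd. destruct i; [apply ev_d1 | apply ev_d2]. Qed.

Definition chr a b c d e f p q : Prop :=
  p*p - a*p - b*q + r11 a b c d e f = 0 /\ p*q - c*p - d*q + r12 a b c d e f = 0 /\
  q*q - e*p - f*q + r22 a b c d e f = 0.
Definition lc a b c d e f p q w1 w2 s11 s12 s22 : Prop :=
  s11 + 2*p*w1 - a*w1 - b*w2 = 0 /\ s12 + p*w2 + q*w1 - c*w1 - d*w2 = 0 /\
  s22 + 2*q*w2 - e*w1 - f*w2 = 0.

Lemma ev_plc l1 l2 w1 w2 a P b Q S T x y :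
  ev l1 l2 w1 w2 (plc a P b Q) (plc a S b T) x y =
  a * ev l1 l2 w1 w2 P S x y + b * ev l1 l2 w1 w2 Q T x y.
Proof. unfold ev, plc, peval; simpl. ring. Qed.

Definition Z2 := P2 0 0 0 0 0 0.
Lemma ev_Z2 l1 l2 w1 w2 x y : ev l1 l2 w1 w2 Z2 Z2 x y = 0.
Proof. unfold ev, Z2, peval; simpl. ring. Qed.

Definition HP (G : Conn) l1 l2 w1 w2 P S i j : poly2 :=
  let Pj := Dp l1 l2 w1 w2 j P S in let Sj := Ds l1 l2 w1 w2 j P S in
  plc 1 (plc 1 (plc 1 (Dp l1 l2 w1 w2 i Pj Sj) (- G i j i1) (Dp l1 l2 w1 w2 i1 P S))
        (- G i j i2) (Dp l1 l2 w1 w2 i2 P S)) (ricci_s G i j) P.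
Definition HS (G : Conn) l1 l2 w1 w2 P S i j : poly2 :=
  let Pj := Dp l1 l2 w1 w2 j P S in let Sj := Ds l1 l2 w1 w2 j P S in
  plc 1 (plc 1 (plc 1 (Ds l1 l2 w1 w2 i Pj Sj) (- G i j i1) (Ds l1 l2 w1 w2 i1 P S))
        (- G i j i2) (Ds l1 l2 w1 w2 i2 P S)) (ricci_s G i j) S.

Lemma ev_Hsol G l1 l2 w1 w2 P S :
  (forall i j, HP G l1 l2 w1 w2 P S i j = Z2 /\ HS G l1 l2 w1 w2 P S i j = Z2) ->
  Hsol G (ev l1 l2 w1 w2 P S) (evd l1 l2 w1 w2 P S) (evdd l1 l2 w1 w2 P S).
Proof.
  intros H. split; [|split]. apply ev_Dpart. apply ev_Dpart2.
  intros i j x y. destruct (H i j) as [H1 H2].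
  unfold HP, HS in H1, H2.
  rewrite <- (ev_Z2 l1 l2 w1 w2 x y). rewrite <- H1 at 1. rewrite <- H2.
  rewrite !ev_plc. unfold evdd, evd, sumI2. field.
Qed.
Lemma M3 a b c d e f p q c0 w1 w2 v1 v2 h3 h4 h5 :
  chr a b c d e f p q -> lc a b c d e f p q v1 v2 0 0 0 ->
  lc a b c d e f p q w1 w2 (v1*v1) (v1*v2) (v2*v2) ->
  2 * h3 = v1 * v1 -> h4 = v1 * v2 -> 2 * h5 = v2 * v2 ->
  Hsol (GammaA a b c d e f) (ev p q 0 0 (P2 c0 w1 w2 h3 h4 h5) Z2)
    (evd p q 0 0 (P2 c0 w1 w2 h3 h4 h5) Z2) (evdd p q 0 0 (P2 c0 w1 w2 h3 h4 h5) Z2).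
Proof.
  intros [C1 [C2 C3]] [V1 [V2 V3]] [W1 [W2 W3]] E3 E4 E5.
  apply ev_Hsol. intros i j.
  destruct i, j;
  cbv beta iota zeta delta [HP HS Dp Ds DP1 DS1 DP2 DS2 plc px py Z2 k0 k1 k2 k3 k4 k5];
  rewrite ?ric11, ?ric12, ?ric21, ?ric22; cbv beta iota delta [GammaA];
  unfold r11, r12, r22 in *;
  split; f_equal; nsatz.
Qed.

Definition cchr a b c d e f l1 l2 w1 w2 : Prop :=
  l1*l1 - w1*w1 - a*l1 - b*l2 + r11 a b c d e f = 0 /\
  l1*l2 - w1*w2 - c*l1 - d*l2 + r12 a b c d e f = 0 /\
  l2*l2 - w2*w2 - e*l1 - f*l2 + r22 a b c d e f = 0 /\
  2*l1*w1 - a*w1 - b*w2 = 0 /\ l1*w2 + w1*l2 - c*w1 - d*w2 = 0 /\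
  2*l2*w2 - e*w1 - f*w2 = 0.

Lemma M4 a b c d e f l1 l2 w1 w2 al be :
  cchr a b c d e f l1 l2 w1 w2 ->
  Hsol (GammaA a b c d e f) (ev l1 l2 w1 w2 (P2 al 0 0 0 0 0) (P2 be 0 0 0 0 0))
    (evd l1 l2 w1 w2 (P2 al 0 0 0 0 0) (P2 be 0 0 0 0 0))
    (evdd l1 l2 w1 w2 (P2 al 0 0 0 0 0) (P2 be 0 0 0 0 0)).
Proof.
  intros [C1 [C2 [C3 [C4 [C5 C6]]]]].
  apply ev_Hsol. intros i j.
  destruct i, j;
  cbv beta iota zeta delta [HP HS Dp Ds DP1 DS1 DP2 DS2 plc px py Z2 k0 k1 k2 k3 k4 k5];
  rewrite ?ric11, ?ric12, ?ric21, ?ric22; cbv beta iota delta [GammaA];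
  unfold r11, r12, r22 in *;
  split; f_equal; nsatz.
Qed.

Definition Concl1 a b c d e f : Prop :=
  exists (n : nat) (B : nat -> R -> R -> Cx),
     cbasis_Qc (GammaA a b c d e f) n B /\
     forall k, (k < n)%nat ->
       exists (a1 a2 : Cx) (p : nat -> nat -> Cx),
         (forall x y, B k x y = Cmul (cexplin a1 a2 x y) (cpoly2 p x y)) /\
         in_Qc (GammaA a b c d e f) (cexplin a1 a2).

Definition Concl2 a b c d e f : Prop :=
  exists (L1 L2 L3 : R * R) (q : nat -> nat -> R) (B : nat -> R -> R -> R),
     rbasis_Q (GammaA a b c d e f) 3 B /\
     ( (forall x y, B 0%nat x y = exp (lin L1 x y) * cos (lin L2 x y) /\
                    B 1%nat x y = exp (lin L1 x y) * sin (lin L2 x y) /\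
                    B 2%nat x y = exp (lin L3 x y))
     \/ (forall x y, B 0%nat x y = exp (lin L1 x y) /\
                     B 1%nat x y = exp (lin L2 x y) /\
                     B 2%nat x y = exp (lin L3 x y))
     \/ (forall x y, B 0%nat x y = exp (lin L1 x y) /\
                     B 1%nat x y = lin L2 x y * exp (lin L1 x y) /\
                     B 2%nat x y = exp (lin L3 x y))
     \/ (forall x y, B 0%nat x y = exp (lin L1 x y) /\
                     B 1%nat x y = lin L2 x y * exp (lin L1 x y) /\
                     B 2%nat x y = rpoly2 q x y * exp (lin L1 x y))).

Lemma in_Q_ext G f g : in_Q G f -> (forall x y, f x y = g x y) -> in_Q G g.
Proof.
  intros H E. replace g with f; auto.
  apply functional_extensionality; intro; apply functional_extensionality; intro; auto.
Qed.

Lemma smooth_zero : smooth (fun _ _ => 0).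
Proof.
  cofix IH. apply smooth_intro with (fun _ _ => 0) (fun _ _ => 0); auto.
  - intros x y eps He. exists 1. split. lra. intros. rewrite Rminus_0_r, Rabs_R0. auto.
  - intros x y. apply derivable_pt_lim_const.
  - intros x y. apply derivable_pt_lim_const.
Qed.

Lemma in_Q_zero G : in_Q G (fun _ _ => 0).
Proof.
  split. apply smooth_zero.
  exists (fun _ _ _ => 0), (fun _ _ _ _ => 0). split; [|split].
  - intros [|] x y; apply derivable_pt_lim_const.
  - intros [|] j x y; apply derivable_pt_lim_const.
  - intros. unfold sumI2. ring.
Qed.

Lemma Hsol_ev_inQ G l1 l2 w1 w2 P S :
  Hsol G (ev l1 l2 w1 w2 P S) (evd l1 l2 w1 w2 P S) (evdd l1 l2 w1 w2 P S) ->
  in_Q G (ev l1 l2 w1 w2 P S).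
Proof. intro H. apply (Hsol_inQ _ _ _ _ (ev_smooth _ _ _ _ _ _) H). Qed.

Lemma ev_00 l1 l2 w1 w2 P S : ev l1 l2 w1 w2 P S 0 0 = k0 P.
Proof.
  unfold ev, peval. replace (l1*0+l2*0) with 0 by ring. replace (w1*0+w2*0) with 0 by ring.
  rewrite exp_0, cos_0, sin_0. ring.
Qed.

Lemma ev_poly p q P x y : ev p q 0 0 P Z2 x y = exp (p*x+q*y) * peval P x y.
Proof.
  unfold ev, Z2, peval. replace (0*x+0*y) with 0 by ring. rewrite cos_0, sin_0. simpl. ring.
Qed.

Lemma ev_trig l1 l2 w1 w2 al be x y :
  ev l1 l2 w1 w2 (P2 al 0 0 0 0 0) (P2 be 0 0 0 0 0) x y =
  exp (l1*x+l2*y) * (al * cos (w1*x+w2*y) + be * sin (w1*x+w2*y)).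
Proof. unfold ev, peval; simpl. ring. Qed.

Lemma cexplin_eq l1 l2 w1 w2 x y :
  cexplin (l1, w1) (l2, w2) x y =
  (exp (l1*x+l2*y) * cos (w1*x+w2*y), exp (l1*x+l2*y) * sin (w1*x+w2*y)).
Proof.
  unfold cexplin, Cexp, Cadd, Cmul, RC; simpl.
  replace (l1 * x - w1 * 0 + (l2 * y - w2 * 0)) with (l1*x+l2*y) by ring.
  replace (l1 * 0 + w1 * x + (l2 * 0 + w2 * y)) with (w1*x+w2*y) by ring. reflexivity.
Qed.

Lemma cexplin_real l1 l2 x y : cexplin (l1, 0) (l2, 0) x y = (exp (l1*x+l2*y), 0).
Proof.
  rewrite cexplin_eq. replace (0*x+0*y) with 0 by ring. rewrite cos_0, sin_0.
  apply injective_projections; simpl; ring.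
Qed.

Lemma cpoly2_real (q : nat -> nat -> R) x y :
  cpoly2 (fun i j => RC (q i j)) x y = (rpoly2 q x y, 0).
Proof. unfold cpoly2, rpoly2, RC, Cmul, Cadd, C0; simpl. apply injective_projections; simpl; ring. Qed.

Lemma csum3 (g : nat -> Cx) : csum 3 g =
  (fst (g 0%nat) + fst (g 1%nat) + fst (g 2%nat), snd (g 0%nat) + snd (g 1%nat) + snd (g 2%nat)).
Proof. simpl. unfold Cadd, C0; simpl. apply injective_projections; simpl; ring. Qed.

Lemma rsum3 (g : nat -> R) : rsum 3 g = g 0%nat + g 1%nat + g 2%nat.
Proof. simpl. ring. Qed.

Lemma part1_real a b c d e f (B : nat -> R -> R -> R) (L : nat -> R * R)
  (q : nat -> nat -> nat -> R) :
  rbasis_Q (GammaA a b c d e f) 3 B ->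
  (forall k, (k < 3)%nat -> forall x y, B k x y = exp (lin (L k) x y) * rpoly2 (q k) x y) ->
  (forall k, (k < 3)%nat -> in_Q (GammaA a b c d e f) (fun x y => exp (lin (L k) x y))) ->
  Concl1 a b c d e f.
Proof.
  intros [HB1 [HB2 HB3]] HBe HE.
  set (Bc := fun k x y => Cmul (cexplin (RC (fst (L k))) (RC (snd (L k))) x y)
                               (cpoly2 (fun i j => RC (q k i j)) x y)).
  assert (BcE : forall k, (k < 3)%nat -> forall x y, Bc k x y = (B k x y, 0)).
  { intros k Hk x y. unfold Bc, RC. rewrite cexplin_real.
    change (fun i j => (q k i j, 0)) with (fun i j => RC (q k i j)).
    rewrite cpoly2_real, HBe by auto. unfold Cmul, lin; simpl. apply injective_projections; simpl; ring. }
  exists 3%nat, Bc. split; [split; [|split] |].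
  - intros k Hk. split.
    + apply in_Q_ext with (B k); auto. intros; rewrite BcE; auto.
    + apply in_Q_ext with (fun _ _ => 0). apply in_Q_zero. intros; rewrite BcE; auto.
  - intros cc Hc.
    assert (Hf : forall x y, rsum 3 (fun k => fst (cc k) * B k x y) = 0).
    { intros x y. specialize (Hc x y). rewrite csum3 in Hc. rewrite rsum3.
      rewrite !BcE in Hc by lia. unfold Cmul, C0 in Hc; simpl in Hc.
      injection Hc; intros; lra. }
    assert (Hs : forall x y, rsum 3 (fun k => snd (cc k) * B k x y) = 0).
    { intros x y. specialize (Hc x y). rewrite csum3 in Hc. rewrite rsum3.
      rewrite !BcE in Hc by lia. unfold Cmul, C0 in Hc; simpl in Hc.
      injection Hc; intros; lra. }
    intros k Hk. assert (X1 := HB2 _ Hf k Hk). assert (X2 := HB2 _ Hs k Hk).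
    simpl in X1, X2. unfold C0. rewrite (surjective_pairing (cc k)), X1, X2. reflexivity.
  - intros F [F1 F2].
    destruct (HB3 _ F1) as [u Hu]. destruct (HB3 _ F2) as [v Hv].
    exists (fun k => (u k, v k)). intros x y. rewrite csum3.
    rewrite !BcE by lia. specialize (Hu x y). specialize (Hv x y). rewrite rsum3 in Hu, Hv.
    rewrite (surjective_pairing (F x y)). unfold Cmul; simpl.
    apply injective_projections; simpl; [rewrite Hu | rewrite Hv]; ring.
  - intros k Hk. exists (RC (fst (L k))), (RC (snd (L k))), (fun i j => RC (q k i j)).
    split. intros; reflexivity.
    split.
    + apply in_Q_ext with (fun x y => exp (lin (L k) x y)); auto.
      intros x y. unfold RC. rewrite cexplin_real. reflexivity.
    + apply in_Q_ext with (fun _ _ => 0). apply in_Q_zero.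
      intros x y. unfold RC. rewrite cexplin_real. reflexivity.
Qed.

Lemma evd_00_1 l1 l2 w1 w2 P S :
  evd l1 l2 w1 w2 P S i1 0 0 = l1 * k0 P + k1 P + w1 * k0 S.
Proof. unfold evd. rewrite ev_00. cbv [Dp DP1 plc px k0 k1]. ring. Qed.
Lemma evd_00_2 l1 l2 w1 w2 P S :
  evd l1 l2 w1 w2 P S i2 0 0 = l2 * k0 P + k2 P + w2 * k0 S.
Proof. unfold evd. rewrite ev_00. cbv [Dp DP2 plc py k0 k2]. ring. Qed.

Definition qc (c00 c10 c01 c20 c11 c02 : R) (i j : nat) : R :=
  match i, j with
  | O, O => c00 | S O, O => c10 | O, S O => c01 | S (S O), O => c20 | S O, S O => c11
  | O, S (S O) => c02 | _, _ => 0 end.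

Lemma rpoly2_qc c00 c10 c01 c20 c11 c02 x y :
  rpoly2 (qc c00 c10 c01 c20 c11 c02) x y = peval (P2 c00 c10 c01 c20 c11 c02) x y.
Proof. unfold rpoly2, qc, peval; simpl. ring. Qed.

Definition P1 := P2 1 0 0 0 0 0.

Lemma lc0 a b c d e f p q : lc a b c d e f p q 0 0 0 0 0.
Proof. unfold lc. repeat split; ring. Qed.

Lemma Hexp a b c d e f p q : chr a b c d e f p q ->
  Hsol (GammaA a b c d e f) (ev p q 0 0 P1 Z2) (evd p q 0 0 P1 Z2) (evdd p q 0 0 P1 Z2).
Proof.
  intro H. apply M3 with (v1 := 0) (v2 := 0); auto; try apply lc0; try ring.
  replace (0*0) with 0 by ring. apply lc0.
Qed.

Lemma Hlin a b c d e f p q w1 w2 : chr a b c d e f p q -> lc a b c d e f p q w1 w2 0 0 0 ->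
  Hsol (GammaA a b c d e f) (ev p q 0 0 (P2 0 w1 w2 0 0 0) Z2)
    (evd p q 0 0 (P2 0 w1 w2 0 0 0) Z2) (evdd p q 0 0 (P2 0 w1 w2 0 0 0) Z2).
Proof.
  intros H W. apply M3 with (v1 := 0) (v2 := 0); auto; try apply lc0; try ring.
  replace (0*0) with 0 by ring. auto.
Qed.

Ltac detfix D :=
  rewrite ?ev_00, ?evd_00_1, ?evd_00_2; cbn [k0 k1 k2 k3 k4 k5 P1 Z2];
  match goal with |- ?X <> 0 => replace X with D by (unfold det3; ring) end.

Lemma form2 a b c d e f p1 q1 p2 q2 p3 q3 :
  chr a b c d e f p1 q1 -> chr a b c d e f p2 q2 -> chr a b c d e f p3 q3 ->
  det3 1 p1 q1 1 p2 q2 1 p3 q3 <> 0 -> Concl1 a b c d e f /\ Concl2 a b c d e f.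
Proof.
  intros H1 H2 H3 Hd.
  set (B := B3 (ev p1 q1 0 0 P1 Z2) (ev p2 q2 0 0 P1 Z2) (ev p3 q3 0 0 P1 Z2)).
  assert (HB : rbasis_Q (GammaA a b c d e f) 3 B).
  { apply basis3 with (d0 := evd p1 q1 0 0 P1 Z2) (d1 := evd p2 q2 0 0 P1 Z2)
      (d2 := evd p3 q3 0 0 P1 Z2) (dd0 := evdd p1 q1 0 0 P1 Z2)
      (dd1 := evdd p2 q2 0 0 P1 Z2) (dd2 := evdd p3 q3 0 0 P1 Z2);
    try apply ev_smooth; try apply Hexp; auto.
    detfix (det3 1 p1 q1 1 p2 q2 1 p3 q3). exact Hd. }
  assert (BE : forall x y, B 0%nat x y = exp (p1*x+q1*y) /\ B 1%nat x y = exp (p2*x+q2*y)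
                /\ B 2%nat x y = exp (p3*x+q3*y)).
  { intros x y. unfold B, B3. rewrite !ev_poly. unfold P1, peval; simpl.
    repeat split; ring. }
  split.
  - apply part1_real with B (fun k => match k with 0%nat => (p1,q1) | 1%nat => (p2,q2) | _ => (p3,q3) end)
      (fun _ => qc 1 0 0 0 0 0); auto.
    + intros k Hk x y. rewrite rpoly2_qc. unfold lin, peval; cbn [k0 k1 k2 k3 k4 k5].
      destruct (BE x y) as [E1 [E2 E3]].
      destruct k as [|[|[|k]]]; cbn [fst snd]; [rewrite E1 | rewrite E2 | rewrite E3 | lia]; ring.
    + intros k Hk. destruct HB as [HB _].
      destruct k as [|[|[|k]]]; [ | | | lia].
      1: apply in_Q_ext with (B 0%nat); [apply HB; lia |].
      2: apply in_Q_ext with (B 1%nat); [apply HB; lia |].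
      3: apply in_Q_ext with (B 2%nat); [apply HB; lia |].
      all: try (intros x y; destruct (BE x y) as [E1 [E2 E3]]; unfold lin; cbn [fst snd]; auto).
  - exists (p1,q1), (p2,q2), (p3,q3), (fun _ _ => 0), B. split; [exact HB|].
    right; left. intros x y. unfold lin; simpl. apply BE.
Qed.

Lemma form3 a b c d e f p1 q1 w1 w2 p3 q3 :
  chr a b c d e f p1 q1 -> lc a b c d e f p1 q1 w1 w2 0 0 0 -> chr a b c d e f p3 q3 ->
  det3 1 p1 q1 0 w1 w2 1 p3 q3 <> 0 -> Concl1 a b c d e f /\ Concl2 a b c d e f.
Proof.
  intros H1 H2 H3 Hd.
  set (B := B3 (ev p1 q1 0 0 P1 Z2) (ev p1 q1 0 0 (P2 0 w1 w2 0 0 0) Z2) (ev p3 q3 0 0 P1 Z2)).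
  assert (HB : rbasis_Q (GammaA a b c d e f) 3 B).
  { apply basis3 with (d0 := evd p1 q1 0 0 P1 Z2) (d1 := evd p1 q1 0 0 (P2 0 w1 w2 0 0 0) Z2)
      (d2 := evd p3 q3 0 0 P1 Z2) (dd0 := evdd p1 q1 0 0 P1 Z2)
      (dd1 := evdd p1 q1 0 0 (P2 0 w1 w2 0 0 0) Z2) (dd2 := evdd p3 q3 0 0 P1 Z2);
    try apply ev_smooth; try apply Hexp; try apply Hlin; auto.
    detfix (det3 1 p1 q1 0 w1 w2 1 p3 q3). exact Hd. }
  assert (BE : forall x y, B 0%nat x y = exp (p1*x+q1*y) /\
                B 1%nat x y = (w1*x+w2*y) * exp (p1*x+q1*y)
                /\ B 2%nat x y = exp (p3*x+q3*y)).
  { intros x y. unfold B, B3. rewrite !ev_poly. unfold P1, peval; simpl.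
    repeat split; ring. }
  split.
  - apply part1_real with B (fun k => match k with 0%nat => (p1,q1) | 1%nat => (p1,q1) | _ => (p3,q3) end)
      (fun k => match k with 1%nat => qc 0 w1 w2 0 0 0 | _ => qc 1 0 0 0 0 0 end); auto.
    + intros k Hk x y. destruct (BE x y) as [E1 [E2 E3]].
      destruct k as [|[|[|k]]]; cbn [fst snd]; rewrite ?rpoly2_qc; unfold lin, peval;
      cbn [k0 k1 k2 k3 k4 k5 fst snd]; [rewrite E1 | rewrite E2 | rewrite E3 | lia]; ring.
    + intros k Hk. destruct HB as [HB' _].
      destruct k as [|[|[|k]]]; [ | | | lia].
      1: apply in_Q_ext with (B 0%nat); [apply HB'; lia |].
      2: apply in_Q_ext with (B 0%nat); [apply HB'; lia |].
      3: apply in_Q_ext with (B 2%nat); [apply HB'; lia |].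
      all: try (intros x y; destruct (BE x y) as [E1 [E2 E3]]; unfold lin; cbn [fst snd]; auto).
  - exists (p1,q1), (w1,w2), (p3,q3), (fun _ _ => 0), B. split; [exact HB|].
    right; right; left. intros x y. unfold lin; simpl. apply BE.
Qed.

Lemma form4 a b c d e f p1 q1 u1 u2 v1 v2 w1 w2 h3 h4 h5 :
  chr a b c d e f p1 q1 -> lc a b c d e f p1 q1 u1 u2 0 0 0 ->
  lc a b c d e f p1 q1 v1 v2 0 0 0 -> lc a b c d e f p1 q1 w1 w2 (v1*v1) (v1*v2) (v2*v2) ->
  2 * h3 = v1 * v1 -> h4 = v1 * v2 -> 2 * h5 = v2 * v2 ->
  det3 1 p1 q1 0 u1 u2 0 w1 w2 <> 0 -> Concl1 a b c d e f /\ Concl2 a b c d e f.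
Proof.
  intros H1 H2 H3 H4 E3 E4 E5 Hd.
  set (B := B3 (ev p1 q1 0 0 P1 Z2) (ev p1 q1 0 0 (P2 0 u1 u2 0 0 0) Z2)
              (ev p1 q1 0 0 (P2 0 w1 w2 h3 h4 h5) Z2)).
  assert (HB : rbasis_Q (GammaA a b c d e f) 3 B).
  { apply basis3 with (d0 := evd p1 q1 0 0 P1 Z2) (d1 := evd p1 q1 0 0 (P2 0 u1 u2 0 0 0) Z2)
      (d2 := evd p1 q1 0 0 (P2 0 w1 w2 h3 h4 h5) Z2) (dd0 := evdd p1 q1 0 0 P1 Z2)
      (dd1 := evdd p1 q1 0 0 (P2 0 u1 u2 0 0 0) Z2) (dd2 := evdd p1 q1 0 0 (P2 0 w1 w2 h3 h4 h5) Z2);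
    try apply ev_smooth; try apply Hexp; try apply Hlin; auto.
    apply M3 with v1 v2; auto.
    detfix (det3 1 p1 q1 0 u1 u2 0 w1 w2). exact Hd. }
  assert (BE : forall x y, B 0%nat x y = exp (p1*x+q1*y) /\
                B 1%nat x y = (u1*x+u2*y) * exp (p1*x+q1*y)
                /\ B 2%nat x y = peval (P2 0 w1 w2 h3 h4 h5) x y * exp (p1*x+q1*y)).
  { intros x y. unfold B, B3. rewrite !ev_poly. unfold P1, peval; simpl.
    repeat split; ring. }
  split.
  - apply part1_real with B (fun k => (p1,q1))
      (fun k => match k with 0%nat => qc 1 0 0 0 0 0 | 1%nat => qc 0 u1 u2 0 0 0
                 | _ => qc 0 w1 w2 h3 h4 h5 end); auto.
    + intros k Hk x y. destruct (BE x y) as [E1' [E2' E3']].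
      destruct k as [|[|[|k]]]; rewrite ?rpoly2_qc; unfold lin;
      cbn [fst snd]; [rewrite E1' | rewrite E2' | rewrite E3' | lia]; unfold peval;
      cbn [k0 k1 k2 k3 k4 k5]; ring.
    + intros k Hk. destruct HB as [HB' _].
      apply in_Q_ext with (B 0%nat); [apply HB'; lia |].
      intros x y; destruct (BE x y) as [E1' [E2' E3']]; unfold lin; cbn [fst snd]; auto.
  - exists (p1,q1), (u1,u2), (p1,q1), (qc 0 w1 w2 h3 h4 h5), B. split; [exact HB|].
    right; right; right. intros x y. unfold lin; simpl. rewrite rpoly2_qc. apply BE.
Qed.

Lemma Htrig a b c d e f l1 l2 w1 w2 al be : cchr a b c d e f l1 l2 w1 w2 ->
  Hsol (GammaA a b c d e f) (ev l1 l2 w1 w2 (P2 al 0 0 0 0 0) (P2 be 0 0 0 0 0))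
    (evd l1 l2 w1 w2 (P2 al 0 0 0 0 0) (P2 be 0 0 0 0 0))
    (evdd l1 l2 w1 w2 (P2 al 0 0 0 0 0) (P2 be 0 0 0 0 0)).
Proof. apply M4. Qed.

Lemma form1 a b c d e f l1 l2 w1 w2 p3 q3 :
  cchr a b c d e f l1 l2 w1 w2 -> chr a b c d e f p3 q3 ->
  det3 1 l1 l2 0 w1 w2 1 p3 q3 <> 0 -> Concl1 a b c d e f /\ Concl2 a b c d e f.
Proof.
  intros H1 H3 Hd.
  set (B := B3 (ev l1 l2 w1 w2 (P2 1 0 0 0 0 0) (P2 0 0 0 0 0 0))
               (ev l1 l2 w1 w2 (P2 0 0 0 0 0 0) (P2 1 0 0 0 0 0)) (ev p3 q3 0 0 P1 Z2)).
  assert (HB : rbasis_Q (GammaA a b c d e f) 3 B).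
  { apply basis3 with (d0 := evd l1 l2 w1 w2 (P2 1 0 0 0 0 0) (P2 0 0 0 0 0 0))
      (d1 := evd l1 l2 w1 w2 (P2 0 0 0 0 0 0) (P2 1 0 0 0 0 0))
      (d2 := evd p3 q3 0 0 P1 Z2)
      (dd0 := evdd l1 l2 w1 w2 (P2 1 0 0 0 0 0) (P2 0 0 0 0 0 0))
      (dd1 := evdd l1 l2 w1 w2 (P2 0 0 0 0 0 0) (P2 1 0 0 0 0 0))
      (dd2 := evdd p3 q3 0 0 P1 Z2);
    try apply ev_smooth; try apply Hexp; try apply Htrig; auto.
    detfix (det3 1 l1 l2 0 w1 w2 1 p3 q3). exact Hd. }
  assert (BE : forall x y, B 0%nat x y = exp (l1*x+l2*y) * cos (w1*x+w2*y) /\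
                B 1%nat x y = exp (l1*x+l2*y) * sin (w1*x+w2*y)
                /\ B 2%nat x y = exp (p3*x+q3*y)).
  { intros x y. unfold B, B3. rewrite ev_poly, !ev_trig. unfold P1, peval; simpl.
    repeat split; ring. }
  assert (Hneg : in_Q (GammaA a b c d e f) (fun x y => - B 1%nat x y)).
  { apply in_Q_ext with (ev l1 l2 w1 w2 (P2 0 0 0 0 0 0) (P2 (-1) 0 0 0 0 0)).
    apply Hsol_ev_inQ, Htrig, H1.
    intros x y. rewrite ev_trig. destruct (BE x y) as [_ [E _]]. rewrite E. ring. }
  destruct HB as [HBq [HBi HBs]].
  split.
  - set (Bc := fun k x y => Cmul (match k with 0%nat => cexplin (l1, w1) (l2, w2)
                                            | 1%nat => cexplin (l1, -w1) (l2, -w2)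
                                            | _ => cexplin (p3, 0) (q3, 0) end x y)
                                  (cpoly2 (fun i j => RC (qc 1 0 0 0 0 0 i j)) x y)).
    assert (BcE : forall x y, Bc 0%nat x y = (B 0%nat x y, B 1%nat x y) /\
                    Bc 1%nat x y = (B 0%nat x y, - B 1%nat x y) /\ Bc 2%nat x y = (B 2%nat x y, 0)).
    { intros x y. destruct (BE x y) as [E1 [E2 E3]]. rewrite E1, E2, E3.
      unfold Bc. rewrite cpoly2_real, rpoly2_qc, !cexplin_eq. unfold peval, Cmul; cbn [k0 k1 k2 k3 k4 k5 fst snd].
      replace (-w1*x + -w2*y) with (- (w1*x+w2*y)) by ring. rewrite cos_neg, sin_neg.
      replace (0*x+0*y) with 0 by ring. rewrite cos_0, sin_0.
      repeat split; apply injective_projections; cbn [fst snd]; ring. }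
    exists 3%nat, Bc. split; [split; [|split] |].
    + intros k Hk. destruct k as [|[|[|k]]]; [ | | | lia]; split.
      * apply in_Q_ext with (B 0%nat). apply HBq; lia. intros; rewrite (proj1 (BcE _ _)); auto.
      * apply in_Q_ext with (B 1%nat). apply HBq; lia. intros; rewrite (proj1 (BcE _ _)); auto.
      * apply in_Q_ext with (B 0%nat). apply HBq; lia. intros; rewrite (proj1 (proj2 (BcE _ _))); auto.
      * apply in_Q_ext with (fun x y => - B 1%nat x y). auto. intros; rewrite (proj1 (proj2 (BcE _ _))); auto.
      * apply in_Q_ext with (B 2%nat). apply HBq; lia. intros; rewrite (proj2 (proj2 (BcE _ _))); auto.
      * apply in_Q_ext with (fun _ _ => 0). apply in_Q_zero. intros; rewrite (proj2 (proj2 (BcE _ _))); auto.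
    + intros cc Hc.
      set (x0 := fst (cc 0%nat)); set (y0 := snd (cc 0%nat)); set (x1 := fst (cc 1%nat));
      set (y1 := snd (cc 1%nat)); set (x2 := fst (cc 2%nat)); set (y2 := snd (cc 2%nat)).
      assert (Hf : forall x y, rsum 3 (fun k => (match k with 0%nat => x0 + x1 | 1%nat => y1 - y0 | _ => x2 end)
                                   * B k x y) = 0).
      { intros x y. specialize (Hc x y). rewrite csum3 in Hc. rewrite rsum3.
        destruct (BcE x y) as [E1 [E2 E3]]. rewrite E1, E2, E3 in Hc.
        unfold Cmul, C0 in Hc; cbn [fst snd] in Hc. injection Hc as Hc1 Hc2.
        cbv beta iota. unfold B, B3, x0, x1, x2, y0, y1, y2 in *. etransitivity; [|exact Hc1]; ring. }
      assert (Hs : forall x y, rsum 3 (fun k => (match k with 0%nat => y0 + y1 | 1%nat => x0 - x1 | _ => y2 end)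
                                   * B k x y) = 0).
      { intros x y. specialize (Hc x y). rewrite csum3 in Hc. rewrite rsum3.
        destruct (BcE x y) as [E1 [E2 E3]]. rewrite E1, E2, E3 in Hc.
        unfold Cmul, C0 in Hc; cbn [fst snd] in Hc. injection Hc as Hc1 Hc2.
        cbv beta iota. unfold B, B3, x0, x1, x2, y0, y1, y2 in *. etransitivity; [|exact Hc2]; ring. }
      assert (Z1 := HBi _ Hf 0%nat ltac:(lia)). assert (Z2' := HBi _ Hf 1%nat ltac:(lia)).
      assert (Z3 := HBi _ Hf 2%nat ltac:(lia)). assert (Z4 := HBi _ Hs 0%nat ltac:(lia)).
      assert (Z5 := HBi _ Hs 1%nat ltac:(lia)). assert (Z6 := HBi _ Hs 2%nat ltac:(lia)).
      cbv beta iota in Z1, Z2', Z3, Z4, Z5, Z6.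
      intros k Hk. unfold C0. destruct k as [|[|[|k]]]; [ | | | lia];
        rewrite (surjective_pairing (cc _)); fold x0 y0 x1 y1 x2 y2; f_equal; lra.
    + intros F [F1 F2].
      destruct (HBs _ F1) as [u Hu]. destruct (HBs _ F2) as [v Hv].
      exists (fun k => match k with 0%nat => ((u 0%nat + v 1%nat)/2, (v 0%nat - u 1%nat)/2)
                          | 1%nat => ((u 0%nat - v 1%nat)/2, (u 1%nat + v 0%nat)/2)
                          | _ => (u 2%nat, v 2%nat) end).
      intros x y. rewrite csum3.
      destruct (BcE x y) as [E1 [E2 E3]]. rewrite E1, E2, E3.
      specialize (Hu x y). specialize (Hv x y). rewrite rsum3 in Hu, Hv.
      rewrite (surjective_pairing (F x y)). unfold Cmul; cbn [fst snd].
      apply injective_projections; cbn [fst snd]; [rewrite Hu | rewrite Hv]; field.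
    + intros k Hk. destruct k as [|[|[|k]]]; [ | | | lia].
      * exists (l1, w1), (l2, w2), (fun i j => RC (qc 1 0 0 0 0 0 i j)). split. reflexivity.
        split.
        -- apply in_Q_ext with (B 0%nat). apply HBq; lia. intros x y. rewrite cexplin_eq.
           destruct (BE x y) as [E1 _]. rewrite E1. reflexivity.
        -- apply in_Q_ext with (B 1%nat). apply HBq; lia. intros x y. rewrite cexplin_eq.
           destruct (BE x y) as [_ [E2 _]]. rewrite E2. reflexivity.
      * exists (l1, -w1), (l2, -w2), (fun i j => RC (qc 1 0 0 0 0 0 i j)). split. reflexivity.
        split.
        -- apply in_Q_ext with (B 0%nat). apply HBq; lia. intros x y. rewrite cexplin_eq.
           destruct (BE x y) as [E1 _]. rewrite E1. cbn [fst snd].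
           replace (-w1*x + -w2*y) with (- (w1*x+w2*y)) by ring. rewrite cos_neg. reflexivity.
        -- apply in_Q_ext with (fun x y => - B 1%nat x y). auto. intros x y. rewrite cexplin_eq.
           destruct (BE x y) as [_ [E2 _]]. rewrite E2. cbn [fst snd].
           replace (-w1*x + -w2*y) with (- (w1*x+w2*y)) by ring. rewrite sin_neg. ring.
      * exists (p3, 0), (q3, 0), (fun i j => RC (qc 1 0 0 0 0 0 i j)). split. reflexivity.
        split.
        -- apply in_Q_ext with (B 2%nat). apply HBq; lia. intros x y. rewrite cexplin_real.
           destruct (BE x y) as [_ [_ E3]]. rewrite E3. reflexivity.
        -- apply in_Q_ext with (fun _ _ => 0). apply in_Q_zero. intros x y. rewrite cexplin_real.
           reflexivity.
  - exists (l1,l2), (w1,w2), (p3,q3), (fun _ _ => 0), B. split; [split; auto|].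
    left. intros x y. unfold lin; simpl. apply BE.
Qed.

Lemma cubic_root (al be ga : R) : exists x, x*x*x + al*x*x + be*x + ga = 0.
Proof.
  set (f := fun x => x*x*x + al*x*x + be*x + ga).
  set (M := 1 + Rabs al + Rabs be + Rabs ga).
  assert (Ha := Rabs_pos al). assert (Hb := Rabs_pos be). assert (Hg := Rabs_pos ga).
  assert (Ha1 := Rle_abs al). assert (Hb1 := Rle_abs be). assert (Hg1 := Rle_abs ga).
  assert (Ha2 := Rle_abs (-al)). assert (Hb2 := Rle_abs (-be)). assert (Hg2 := Rle_abs (-ga)).
  rewrite Rabs_Ropp in Ha2, Hb2, Hg2.
  assert (HM : 1 <= M) by (unfold M; lra).
  assert (HM2 : 0 <= M*M) by nra.
  assert (X1 : Rabs be * M <= Rabs be * M * M) by (rewrite Rmult_assoc; apply Rmult_le_compat_l; nra).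
  assert (X2 : Rabs ga <= Rabs ga * M * M) by (rewrite Rmult_assoc; rewrite <- (Rmult_1_r (Rabs ga)) at 1; apply Rmult_le_compat_l; nra).
  assert (X3 : be * M >= - Rabs be * M) by nra.
  assert (X4 : be * (-M) <= Rabs be * M) by nra.
  assert (F1 : 0 < f M).
  { unfold f.
    assert (al*M*M >= - Rabs al * M*M) by nra.
    assert (be*M >= - Rabs be * M*M) by lra.
    assert (ga >= - Rabs ga * M*M) by lra.
    assert (M*M*M - Rabs al*M*M - Rabs be*M*M - Rabs ga*M*M = M*M) by (unfold M; ring).
    nra. }
  assert (F2 : f (-M) < 0).
  { unfold f.
    assert (al*(-M)*(-M) <= Rabs al * M*M) by nra.
    assert (be*(-M) <= Rabs be * M*M) by lra.
    assert (ga <= Rabs ga * M*M) by lra.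
    assert (M*M*M - Rabs al*M*M - Rabs be*M*M - Rabs ga*M*M = M*M) by (unfold M; ring).
    nra. }
  assert (Hc : continuity f) by (unfold f; reg).
  destruct (IVT f (-M) M Hc ltac:(lra) F2 F1) as [z [_ Hz]].
  exists z. exact Hz.
Qed.

Lemma nz_of k X Y : k <> 0 -> Y <> 0 -> k * X = Y -> X <> 0.
Proof. intros Hk HY E HX. apply HY. rewrite <- E, HX. ring. Qed.

Lemma cancel4 b X : b <> 0 -> b*b*b*b*X = 0 -> X = 0.
Proof.
  intros Hb H. assert (b*b*b*b <> 0) by (repeat apply Rmult_integral_contrapositive_currified; auto).
  apply Rmult_integral in H. destruct H; [contradiction | auto].
Qed.

Ltac nz4 b Hb := apply (cancel4 b); [exact Hb | nsatz].

Ltac unf := unfold chr, lc, cchr, r11, r12, r22 in *.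

Ltac clr := repeat match goal with
  | H : _ <> _ |- _ => clear H | H : _ < _ |- _ => clear H | H : _ <= _ |- _ => clear H
  | H : _ > _ |- _ => clear H | H : _ >= _ |- _ => clear H
  | H : _ /\ _ |- _ => destruct H end.
Ltac cl := unf; repeat split; solve [clr; nsatz].
Ltac ns := solve [clr; nsatz].

Lemma case_b0 a b c d e f : b = 0 -> Concl1 a b c d e f /\ Concl2 a b c d e f.
Proof.
  intro Hb0. subst b.
  assert (Hl : chr a 0 c d e f (a-d) c) by (unf; repeat split; ring).
  assert (Hh : 2 * /2 = 1) by field.
  set (h := /2) in *. clearbody h.
  destruct (Req_dec (2*d - a) 0) as [HD | HD].
  - destruct (Req_dec (f - 2*c) 0) as [HF | HF].
    + destruct (Req_dec e 0) as [He | He].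
      * apply form4 with (p1 := a-d) (q1 := c) (u1 := 1) (u2 := 0) (v1 := 0) (v2 := 0)
          (w1 := 0) (w2 := 1) (h3 := 0) (h4 := 0) (h5 := 0); auto; try cl; try ring.
        apply (nz_of 1 _ 1); [lra | lra | unfold det3; ring].
      * assert (Hie : e * /e = 1) by (field; auto). set (ie := /e) in *. clearbody ie.
        apply form4 with (p1 := a-d) (q1 := c) (u1 := 0) (u2 := 1) (v1 := 0) (v2 := 1)
          (w1 := ie) (w2 := 0) (h3 := 0) (h4 := 0) (h5 := h); auto; try cl; try ns.
        apply (nz_of e _ (-1)); [auto | lra | unfold det3; ns].
    + apply form3 with (p1 := a-d) (q1 := c) (w1 := f - 2*c) (w2 := -e) (p3 := a-d) (q3 := c+(f-2*c)); auto; try cl.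
      apply (nz_of 1 _ ((f - 2*c) * (f - 2*c))); [lra | | unfold det3; ns].
      intro X; apply Rmult_integral in X; tauto.
  - set (De := (f-2*c)*(f-2*c) + 4*e*(2*d-a)).
    destruct (Rtotal_order De 0) as [Hlt | [Heq | Hgt]].
    + set (sg := sqrt (-De) * h).
      assert (Hs : 4 * (sg * sg) = - De).
      { unfold sg. replace (4 * (sqrt (- De) * h * (sqrt (- De) * h))) with
          ((2*h)*(2*h) * (sqrt (-De) * sqrt (-De))) by ring. rewrite Hh, sqrt_sqrt; lra. }
      assert (Hsp : 0 < sg) by (unfold sg; apply Rmult_lt_0_compat; [apply sqrt_lt_R0; lra | lra]).
      clearbody sg. unfold De in *.
      apply form1 with (l1 := d) (l2 := c + (f-2*c)*h) (w1 := 0) (w2 := sg) (p3 := a-d) (q3 := c); auto.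
      * cl.
      * apply (nz_of 1 _ (sg * (2*d-a))); [lra | | unfold det3; ns].
        intro X; apply Rmult_integral in X; destruct X; lra.
    + unfold De in Heq.
      apply form3 with (p1 := d) (q1 := c + (f-2*c)*h) (w1 := 0) (w2 := 1) (p3 := a-d) (q3 := c); auto; try cl.
      apply (nz_of 1 _ (2*d-a)); [lra | auto | unfold det3; ns].
    + set (sq := sqrt De).
      assert (Hs : sq * sq = De) by (unfold sq; rewrite sqrt_sqrt; lra).
      assert (Hsp : 0 < sq) by (unfold sq; apply sqrt_lt_R0; lra).
      clearbody sq. unfold De in *.
      apply form2 with (p1 := a-d) (q1 := c) (p2 := d) (q2 := c + ((f-2*c)+sq)*h) (p3 := d) (q3 := c + ((f-2*c)-sq)*h); auto; try cl.
      apply (nz_of 1 _ (- (2*d-a) * sq)); [lra | | unfold det3; ns].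
      intro X. assert (X' : (2*d-a) * sq = 0) by lra. apply Rmult_integral in X'; destruct X'; lra.
Qed.

Lemma case_bn a b c d e f : b <> 0 -> Concl1 a b c d e f /\ Concl2 a b c d e f.
Proof.
  intro Hb.
  assert (Hh : 2 * /2 = 1) by field.
  set (h := /2) in *. clearbody h.
  assert (Hib : b * /b = 1) by (field; auto).
  set (ib := /b) in *. clearbody ib.
  destruct (cubic_root (-(a+d)) (r11 a b c d e f + a*d - b*c) (b * r12 a b c d e f - d * r11 a b c d e f))
    as [p Hp].
  set (q := (p*p - a*p + r11 a b c d e f) * ib).
  assert (Hq : b * q = p*p - a*p + r11 a b c d e f) by (unfold q; rewrite Rmult_comm, Rmult_assoc,
     (Rmult_comm ib b), Hib; ring).
  clearbody q.
  assert (Hl : chr a b c d e f p q).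
  { unf. split; [|split].
    - ns.
    - apply (cancel4 b); [auto | ns].
    - apply (cancel4 b); [auto | ns]. }
  set (A := a - 2*p). set (Dd := d - p). set (T := A + Dd). set (K := A*Dd - b*(c-q)).
  set (De := T*T - 4*K).
  assert (EA : A = a - 2*p) by reflexivity. assert (ED : Dd = d - p) by reflexivity.
  assert (ET : T = A + Dd) by reflexivity. assert (EK : K = A*Dd - b*(c-q)) by reflexivity.
  assert (EDe : De = T*T - 4*K) by reflexivity.
  clearbody A Dd T K De.
  destruct (Rtotal_order De 0) as [Hlt | [Heq | Hgt]].
  -
    set (sg := sqrt (-De) * h).
    assert (Hs : 4 * (sg * sg) = - De).
    { unfold sg. replace (4 * (sqrt (- De) * h * (sqrt (- De) * h))) with
        ((2*h)*(2*h) * (sqrt (-De) * sqrt (-De))) by ring. rewrite Hh, sqrt_sqrt; lra. }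
    assert (Hsp : 0 < sg) by (unfold sg; apply Rmult_lt_0_compat; [apply sqrt_lt_R0; lra | lra]).
    clearbody sg.
    apply form1 with (l1 := p + T*h) (l2 := q + ((T*h)*(T*h) - sg*sg - A*T*h)*ib)
      (w1 := sg) (w2 := sg*Dd*ib) (p3 := p) (q3 := q); auto.
    + cl.
    + apply (nz_of b _ (sg * (T*T*h*h + sg*sg))); [auto | | unfold det3; clear -Hh Hib ET; nsatz].
      intro X; apply Rmult_integral in X; destruct X as [X|X]; [lra|].
      assert (0 <= T*T*h*h) by (replace (T*T*h*h) with ((T*h)*(T*h)) by ring; apply Rle_0_sqr).
      nra.
  -
    destruct (Req_dec T 0) as [HT | HT].
    + apply form4 with (p1 := p) (q1 := q) (u1 := b) (u2 := -A) (v1 := b) (v2 := -A)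
        (w1 := 0) (w2 := b) (h3 := b*b*h) (h4 := -A*b) (h5 := A*A*h); auto; try cl; try ns.
      apply (nz_of 1 _ (b*b)); [lra | | unfold det3; clear; nsatz].
      intro X; apply Rmult_integral in X; tauto.
    + apply form3 with (p1 := p + T*h) (q1 := q + ((T*h)*(T*h) - A*(T*h))*ib) (w1 := b) (w2 := Dd)
        (p3 := p) (q3 := q); auto; try cl.
      apply (nz_of 1 _ ((T*h)*(T*h))); [lra | | unfold det3; clear -Hh Hib ET; nsatz].
      intro X; apply Rmult_integral in X; destruct X as [X|X]; apply Rmult_integral in X;
      destruct X; try lra.
  - set (sq := sqrt De).
    assert (Hs : sq * sq = De) by (unfold sq; rewrite sqrt_sqrt; lra).
    assert (Hsp : 0 < sq) by (unfold sq; apply sqrt_lt_R0; lra).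
    clearbody sq.
    destruct (Req_dec K 0) as [HK | HK].
    + assert (HT : T <> 0) by (intro X; subst; nra).
      apply form3 with (p1 := p) (q1 := q) (w1 := b) (w2 := -A)
        (p3 := p + T) (q3 := q + Dd*T*ib); auto; try cl.
      apply (nz_of 1 _ (T*T)); [lra | | unfold det3; clear -Hh Hib ET; nsatz].
      intro X; apply Rmult_integral in X; tauto.
    + set (s1 := (T+sq)*h). set (s2 := (T-sq)*h).
      assert (E1 : s1 = (T+sq)*h) by reflexivity. assert (E2 : s2 = (T-sq)*h) by reflexivity.
      clearbody s1 s2.
      apply form2 with (p1 := p) (q1 := q) (p2 := p + s1) (q2 := q + (s1*s1 - A*s1)*ib)
        (p3 := p + s2) (q3 := q + (s2*s2 - A*s2)*ib); auto; try cl.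
      apply (nz_of b _ (- K * sq)); [auto | | unfold det3; clear -Hh Hib ET EDe Hs E1 E2; nsatz].
      intro X. assert (X' : K * sq = 0) by lra. apply Rmult_integral in X'; destruct X'; lra.
Qed.

Theorem theorem2p2 (a b c d e f : R) :
  (* (1) *)
  (exists (n : nat) (B : nat -> R -> R -> Cx),
     cbasis_Qc (GammaA a b c d e f) n B /\
     forall k, (k < n)%nat ->
       exists (a1 a2 : Cx) (p : nat -> nat -> Cx),
         (forall x y, B k x y = Cmul (cexplin a1 a2 x y) (cpoly2 p x y)) /\
         in_Qc (GammaA a b c d e f) (cexplin a1 a2))
  /\
  (* (2) *)
  (exists (L1 L2 L3 : R * R) (q : nat -> nat -> R) (B : nat -> R -> R -> R),
     rbasis_Q (GammaA a b c d e f) 3 B /\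
     ( (forall x y, B 0%nat x y = exp (lin L1 x y) * cos (lin L2 x y) /\
                    B 1%nat x y = exp (lin L1 x y) * sin (lin L2 x y) /\
                    B 2%nat x y = exp (lin L3 x y))
     \/ (forall x y, B 0%nat x y = exp (lin L1 x y) /\
                     B 1%nat x y = exp (lin L2 x y) /\
                     B 2%nat x y = exp (lin L3 x y))
     \/ (forall x y, B 0%nat x y = exp (lin L1 x y) /\
                     B 1%nat x y = lin L2 x y * exp (lin L1 x y) /\
                     B 2%nat x y = exp (lin L3 x y))
     \/ (forall x y, B 0%nat x y = exp (lin L1 x y) /\
                     B 1%nat x y = lin L2 x y * exp (lin L1 x y) /\
                     B 2%nat x y = rpoly2 q x y * exp (lin L1 x y)))).
Proof.
  destruct (Req_dec b 0) as [Hb | Hb].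
  - destruct (case_b0 a b c d e f Hb) as [X Y]. split; [exact X | exact Y].
  - destruct (case_bn a b c d e f Hb) as [X Y]. split; [exact X | exact Y].
Qed.
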